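(* Let $\lambda \in \Lambda$, $E$ a countable set, $\sigma$ a random virtual permutation of $E$ with law $\mathbb{P}_\lambda$, $C = L \cup \bigcup_k C_k$ and $\mu$ as described in the context, and let $(X_x)_{x \in E}$ be i.i.d. random variables in $C$ with law $\mu$ such that almost surely: $X_x \in L$ iff $x$ is a fixed point of $\sigma$; for distinct $x,y$, $x\sim_\sigma y$ iff $X_x, X_y$ lie on the same circle $C_k$, in which case $\lambda(x) = \lambda(y) = \lambda_k$; and for distinct $x\sim_\sigma y$, $\delta(x,y) = X_y - X_x$ modulo $\lambda(x)$. Then for every finite $I \subset E$ and $x \in I$, almost surely: if $X_x \in L$ then $\sigma_I(x) = x$; if $X_x \in C_k$ for some $k\geq1$, then $\sigma_I(x) = y$ where $X_y$ is the first point of $C_k \cap \{X_z : z \in I\}$ encountered when moving counterclockwise on $C_k$ starting just after $X_x$ (in particular $\sigma_I(x) = x$ if $X_x$ is the only such point).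
   Context: A virtual permutation of a set $E$ is a family $\sigma = (\sigma_I)$ indexed by finite subsets $I\subset E$, $\sigma_I$ a permutation of $I$, with $\sigma_I(x)=\sigma_J^m(x)$ ($m\ge1$ minimal with $\sigma_J^m(x)\in I$) for $I\subset J$; the space carries the $\sigma$-algebra generated by $\sigma\mapsto\sigma_J$. $x\sim_\sigma y$ iff $x,y$ lie in the same cycle of $\sigma_I$ for some (equivalently every) finite $I\ni x,y$; $\mathcal{C}_\sigma(x)$ is the class of $x$; $x$ is a fixed point of $\sigma$ if $\sigma_I(x)=x$ for all finite $I\ni x$. A law is central if each $\sigma_I$ has conjugation-invariant law. Under a central law, $\lambda(x)$ is the $L^1$ limit as $|I|\to\infty$ of $|I\cap\mathcal{C}_\sigma(x)|/|I|$; $\lambda_k$ is the supremum of $\min_{j\le k}\lambda(x_j)$ over pairwise non-equivalent $x_1,\dots,x_k$. $\Lambda$ is the set of non-increasing sequences in $[0,1]$ with sum $\le 1$; $\mathbb{P}_\lambda$ is the unique central measure under which $(\lambda_k)=\lambda$ a.s. For $x\sim_\sigma y$, $k_I(x,y)\in\{0,\dots,|I\cap\mathcal{C}_\sigma(x)|-1\}$ is the integer with $\sigma_I^{k_I(x,y)}(x)=y$, $\Delta(x,y)$ is the $L^1$ limit of $k_I(x,y)/|I|$ and $\delta(x,y)$ its class modulo $\lambda(x)$. The space $C$: for each $k$ with $\lambda_k>0$, a circle $C_k$ of perimeter $\lambda_k$ (pairwise disjoint), with $y-x\in\mathbb{R}/\lambda_k\mathbb{Z}$ the counterclockwise arc length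 from $x$ to $y$; $L$ a disjoint segment of length $1-\sum_k\lambda_k$ (empty if $0$); $C = L\cup\bigcup_k C_k$; $\mu$ the uniform probability measure on $C$ (arc length / length). *)

(* Defs.v *)
From HB Require Import structures.
From mathcomp Require Import all_boot all_order all_algebra.
From mathcomp Require Import finmap.
From mathcomp Require Import all_classical all_reals all_analysis.
Set Implicit Arguments. Unset Strict Implicit. Unset Printing Implicit Defensive.
Import Order.TTheory GRing.Theory Num.Theory.
Local Open Scope classical_set_scope.
Local Open Scope fset_scope.
Local Open Scope ring_scope.

(* A virtual permutation is represented as a family indexed by finite   *)
(* subsets I of E: s I : E -> E is a permutation of I (and the identity *)
(* outside I, which is only a normalisation of the representation).     *)

Definition perm_of {E : choiceType} (I : {fset E}) (f : E -> E) : Prop :=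
  (forall x, x \notin I -> f x = x) /\
  {in I, forall x, f x \in I} /\ {in I &, injective f}.

Definition is_vperm {E : choiceType} (s : {fset E} -> E -> E) : Prop :=
  (forall I, perm_of I (s I)) /\
  (forall I J : {fset E}, fsubset I J -> forall x, x \in I ->
     exists m : nat, (0 < m)%N /\ iter m (s J) x \in I /\
       (forall j : nat, (0 < j < m)%N -> iter j (s J) x \notin I) /\
       s I x = iter m (s J) x).

Definition vequiv {E : choiceType} (s : {fset E} -> E -> E) (x y : E) : Prop :=
  exists I : {fset E}, [/\ x \in I, y \in I & exists m : nat, iter m (s I) x = y].

Definition vfixed {E : choiceType} (s : {fset E} -> E -> E) (x : E) : Prop :=
  forall I : {fset E}, x \in I -> s I x = x.

Definition class_card {E : choiceType} (s : {fset E} -> E -> E) (I : {fset E}) (x : E) : nat :=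
  #|` [fset z in I | `[< vequiv s x z >]] |.

(* k_I(x,y): the least m >= 0 with s_I^m(x) = y (for x ~ y, x, y in I,
   this is the unique such m in {0, ..., |I \cap C(x)| - 1}) *)
Definition kI {E : choiceType} (s : {fset E} -> E -> E) (I : {fset E}) (x y : E) : nat :=
  index y (traject (s I) x #|` I|).

Section Random.
Context {R : realType} {d : measure_display} {Omega : measurableType d}
        (P : probability Omega R) {E : choiceType}.

(* s : Omega -> virtual permutation, measurable w.r.t. the sigma-algebra
   generated by the maps sigma |-> sigma_J *)
Definition random_vperm (s : Omega -> {fset E} -> E -> E) : Prop :=
  (forall w, is_vperm (s w)) /\
  (forall (J : {fset E}) (x y : E), measurable [set w | s w J x = y]).

(* central law: each sigma_I has a conjugation-invariant law *)
Definition central (s : Omega -> {fset E} -> E -> E) : Prop :=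
  forall (I : {fset E}) (tau f : E -> E), perm_of I tau ->
    P [set w | forall z, z \in I -> s w I z = f z] =
    P [set w | forall z, z \in I -> s w I (tau z) = tau (f z)].

Definition is_lambda (s : Omega -> {fset E} -> E -> E) (lam : E -> Omega -> R) : Prop :=
  forall x, measurable_fun setT (lam x) /\
    forall e : R, 0 < e -> exists N : nat, forall I : {fset E}, (N <= #|` I|)%N ->
      (\int[P]_w (`| (class_card (s w) I x)%:R / (#|` I|)%:R - lam x w |)%:E
        < e%:E)%E.

Definition is_Delta (s : Omega -> {fset E} -> E -> E) (Delta : E -> E -> Omega -> R) : Prop :=
  forall x y, measurable_fun setT (Delta x y) /\
    forall e : R, 0 < e -> exists N : nat, forall I : {fset E},
      x \in I -> y \in I -> (N <= #|` I|)%N ->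
      (\int[P]_w (if `[< vequiv (s w) x y >]
                  then `| (kI (s w) I x y)%:R / (#|` I|)%:R - Delta x y w |
                  else 0)%:E < e%:E)%E.

End Random.

(* lambda_{n+1}(w) (0-based index n): supremum over pairwise non-equivalent
   x_1, ..., x_{n+1} of min_j lambda(x_j) *)
Definition lamk {E : choiceType} {R : realType} {T : Type}
  (s : T -> {fset E} -> E -> E) (lam : E -> T -> R) (n : nat) (w : T) : R :=
  sup [set m : R | exists xs : 'I_n.+1 -> E,
         (forall i j, i != j -> ~ vequiv (s w) (xs i) (xs j)) /\
         m = \big[Num.min/lam (xs ord0) w]_(i < n.+1) lam (xs i) w].

(* Lambda: non-increasing sequences in [0,1] with sum <= 1
   (0-based: l n stands for lambda_{n+1}) *)
Definition in_Lambda {R : realType} (l : nat -> R) : Prop :=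
  (forall n, 0 <= l n <= 1) /\ (forall n, l n.+1 <= l n) /\
  (forall N, \sum_(i < N) l i <= 1).

(* The space C = L u U_k C_k.  A point is encoded as (c, t) with        *)
(*   c = None     : point of L at abscissa t in [0, 1 - sum_k lambda_k)  *)
(*   c = Some n   : point of the circle C_{n+1} (perimeter l n) at       *)
(*                  counterclockwise arc-coordinate t in [0, l n).       *)

Definition Cmeas {R : realType} (B : set (option nat * R)) : Prop :=
  forall c, measurable [set t : R | B (c, t)].

Definition Llen {R : realType} (l : nat -> R) : \bar R :=
  (1%:E - \sum_(n <oo) (l n)%:E)%E.

Definition muC {R : realType} (l : nat -> R) (B : set (option nat * R)) : \bar R :=
  (lebesgue_measure ([set t : R | B (None, t)] `&` [set t : R | (0 <= t)%R /\ (t%:E < Llen l)%E])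
   + \sum_(n <oo) lebesgue_measure
        ([set t : R | B (Some n, t)] `&` [set t : R | (0 <= t < l n)%R]))%E.

(* counterclockwise arc length from a to b on a circle of perimeter p,
   taken in (0, p] (so that the starting point itself comes last) *)
Definition ccw {R : realType} (p a b : R) : R :=
  if a < b then b - a else b - a + p.

Section IID.
Context {R : realType} {d : measure_display} {Omega : measurableType d}
        (P : probability Omega R) {E : choiceType}.

Definition iid_mu (l : nat -> R) (Xc : E -> Omega -> option nat) (Xt : E -> Omega -> R) : Prop :=
  (forall x B, Cmeas B -> measurable [set w | B (Xc x w, Xt x w)]) /\
  (forall x B, Cmeas B -> P [set w | B (Xc x w, Xt x w)] = muC l B) /\
  (forall (xs : seq E) (B : E -> set (option nat * R)), uniq xs ->
     (forall x, Cmeas (B x)) ->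
     P [set w | forall x, x \in xs -> B x (Xc x w, Xt x w)] =
     (\prod_(x <- xs) P [set w | B x (Xc x w, Xt x w)])%E).

End IID.

(* Main.v *)
Require Import Defs.
From HB Require Import structures.
From mathcomp Require Import all_boot all_order all_algebra.
From mathcomp Require Import finmap.
From mathcomp Require Import all_classical all_reals all_analysis.
Import Order.TTheory GRing.Theory Num.Theory.
Local Open Scope classical_set_scope.
Local Open Scope fset_scope.
Local Open Scope ring_scope.
From mathcomp Require Import measurable_realfun ring lra.
Section S.
Context {R : realType} {d : measure_display} {Omega : measurableType d}
        (P : probability Omega R).
Import HBNNSimple.
Lemma markov_inner (f : Omega -> R) (A : set Omega) (c : R) :
  measurable A -> 0 < c -> (forall w, 0 <= f w) -> (forall w, A w -> c <= f w) ->
  (c%:E * P A <= \int[P]_w (f w)%:E)%E.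
Proof.
move=> mA c0 f0 fA.
rewrite ge0_integralTE; last by move=> w; rewrite lee_fin.
set h := scale_nnsfun (indic_nnsfun R mA) (ltW c0).
have -> : (c%:E * P A = sintegral P h)%E.
  by rewrite /h /scale_nnsfun /= sintegralrM sintegral_indic.
apply: ereal_sup_ubound; exists h => //= w.
rewrite /h /= measurable_realfun.mindicE; case: (boolP (w \in A)) => [/set_mem /fA|_]; rewrite /= ?mulr1 ?mulr0 ?lee_fin //.
Qed.

Lemma meas_le (f g : Omega -> R) : measurable_fun setT f -> measurable_fun setT g ->
  measurable [set w | f w <= g w].
Proof.
move=> mf mg; have := measurable_fun_ler mf mg measurableT (Y := [set true]) ltac:(by []).
by rewrite setTI.
Qed.

Lemma ae_ineq_null (C : set Omega) (F G : Omega -> R) (u v : nat -> Omega -> R) (eps : R) :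
 0 < eps -> measurable C -> measurable_fun setT F -> measurable_fun setT G ->
 (forall n, measurable_fun setT (u n)) -> (forall n, measurable_fun setT (v n)) ->
 (forall n w, C w -> u n w <= v n w) ->
 (forall dl e : R, 0 < dl -> 0 < e -> exists n,
      (P (C `&` [set w | (dl <= F w - u n w)%R])%classic <= e%:E)%E /\
      (P (C `&` [set w | (dl <= v n w - G w)%R])%classic <= e%:E)%E) ->
 P (C `&` [set w | eps <= F w - G w])%classic = 0.
Proof.
move=> e0 mC mF mG mu mv uv H.
have mS (f g : Omega -> R) : measurable_fun setT f -> measurable_fun setT g ->
    measurable (C `&` [set w | f w <= g w])%classic.
  by move=> mf mg; apply: measurableI => //; exact: meas_le.
have mB : measurable (C `&` [set w | eps <= F w - G w])%classic.
  by apply: mS; [exact: measurable_cst|exact: measurable_funB].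
apply/eqP; rewrite -measure_le0; apply/lee_addgt0Pr => _ /posnumP[e].
rewrite add0e.
have [n [h1 h2]] := H (eps / 2) (e%:num / 2) ltac:(by rewrite divr_gt0) ltac:(by rewrite divr_gt0).
set B1 := (C `&` [set w | eps / 2 <= F w - u n w])%classic.
set B2 := (C `&` [set w | eps / 2 <= v n w - G w])%classic.
have mB1 : measurable B1 by apply: mS; [exact: measurable_cst|exact: measurable_funB].
have mB2 : measurable B2 by apply: mS; [exact: measurable_cst|exact: measurable_funB].
apply: (le_trans (y := P (B1 `|` B2)%classic)).
  apply: le_measure; rewrite ?inE //; first exact: measurableU.
  move=> w [Cw /= hw]; rewrite /B1 /B2 /=.
  have := uv n w Cw.
  case: (lerP (eps / 2) (F w - u n w)) => h; first by left.
  right; split => //; lra.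
apply: (le_trans (measureU2 _ mB1 mB2)).
have -> : (e%:num)%:E = ((e%:num / 2)%:E + (e%:num / 2)%:E)%E by rewrite -EFinD -splitr.
exact: leeD.
Qed.

Lemma null_ae (A : set Omega) : measurable A -> P A = 0 -> {ae P, forall w, ~ A w}.
Proof. by move=> mA PA; exists A; split => // w /= /contrapT. Qed.

Lemma ae_ineq (C : set Omega) (F G : Omega -> R) (u v : nat -> Omega -> R) :
 measurable C -> measurable_fun setT F -> measurable_fun setT G ->
 (forall n, measurable_fun setT (u n)) -> (forall n, measurable_fun setT (v n)) ->
 (forall n w, C w -> u n w <= v n w) ->
 (forall dl e : R, 0 < dl -> 0 < e -> exists n,
      (P (C `&` [set w | (dl <= F w - u n w)%R])%classic <= e%:E)%E /\
      (P (C `&` [set w | (dl <= v n w - G w)%R])%classic <= e%:E)%E) ->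
 {ae P, forall w, C w -> F w <= G w}.
Proof.
move=> mC mF mG mu mv uv H.
have : {ae P, forall w m, ~ (C `&` [set w | m.+1%:R^-1 <= F w - G w])%classic w}.
  apply: ae_foralln => m; apply: null_ae.
    apply: measurableI => //; apply: meas_le; [exact: measurable_cst|exact: measurable_funB].
  by apply: (ae_ineq_null C F G u v) => //; rewrite invr_gt0 ltr0n.
apply: filterS => w hw Cw; rewrite leNgt; apply/negP => GF.
have [k hk] := ltr_add_invr GF.
by apply: (hw k); split => //=; rewrite lerBrDr addrC ltW.
Qed.

Section MeasS.
Context {E : countType} (s : Omega -> {fset E} -> E -> E) (J : {fset E}).
Hypothesis sid : forall w z, z \notin J -> s w J z = z.
Hypothesis sm : forall z y, measurable [set w | s w J z = y].

Lemma meas_map (js : seq E) (t : seq E) : measurable [set w | map (s w J) js = t].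
Proof.
elim: js t => [|z js IH] [|y t] /=.
- by rewrite [X in measurable X](_ : _ = setT) //; apply/seteqP; split.
- by rewrite [X in measurable X](_ : _ = set0) //; apply/seteqP; split.
- by rewrite [X in measurable X](_ : _ = set0) //; apply/seteqP; split.
rewrite [X in measurable X](_ : _ = ([set w | s w J z = y] `&` [set w | map (s w J) js = t])%classic).
  exact: measurableI.
by apply/seteqP; split => w /= => [[-> ->]|[-> ->]].
Qed.

Definition gJ (t : seq E) : E -> E :=
  fun z => if z \in J then nth z t (index z (J : seq E)) else z.

Lemma meas_sJ (Q : (E -> E) -> Prop) : measurable [set w | Q (s w J)].
Proof.
rewrite [X in measurable X](_ : _ = \bigcup_(t : seq E)
   [set w | Q (gJ t) /\ map (s w J) (J : seq E) = t])%classic.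
  apply: countable_bigcupT_measurable; first exact: countableP.
  move=> t; have [q|nq] := pselect (Q (gJ t)).
    rewrite [X in measurable X](_ : _ = [set w | map (s w J) (J : seq E) = t]).
      exact: meas_map.
    by apply/seteqP; split => w /= => [[]|] //.
  by rewrite [X in measurable X](_ : _ = set0) //; apply/seteqP; split => w /= [].
apply/seteqP; split => w /=.
  move=> Qw; exists (map (s w J) (J : seq E)) => //; split => //.
  suff -> : gJ (map (s w J) J) = s w J by [].
  apply: funext => z; rewrite /gJ; case: ifPn => zJ; last by rewrite sid.
  rewrite (set_nth_default (s w J z)); last by rewrite size_map index_mem.
  by rewrite (nth_map z) ?index_mem // nth_index.
move=> [t _ [q ht]]; suff <- : gJ t = s w J by [].
apply: funext => z; rewrite /gJ -ht; case: ifPn => zJ; last by rewrite sid.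
rewrite (set_nth_default (s w J z)); last by rewrite size_map index_mem.
by rewrite (nth_map z) ?index_mem // nth_index.
Qed.

Lemma measf_sJ (h : (E -> E) -> R) : measurable_fun setT (fun w => h (s w J)).
Proof. by move=> _ Y _; rewrite setTI; exact: (meas_sJ (fun f => Y (h f))). Qed.

End MeasS.
End S.
From mathcomp Require Import zify.
Set Implicit Arguments. Unset Strict Implicit. Unset Printing Implicit Defensive.
Section Comb.
Context {E : choiceType}.
Local Open Scope nat_scope.

Lemma iter_in (J : {fset E}) f x m : perm_of J f -> x \in J -> iter m f x \in J.
Proof. by move=> [_ [fJ _]] xJ; elim: m => //= m IH; exact: fJ. Qed.

Lemma iter_cancel (J : {fset E}) f x i j : perm_of J f -> x \in J -> i <= j ->
  iter i f x = iter j f x -> iter (j - i) f x = x.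
Proof.
move=> pf xJ; elim: i j => [|i IH] j; first by rewrite subn0.
case: j => // j; rewrite ltnS => ij /= h.
have [_ [_ finj]] := pf.
have := finj _ _ (iter_in i pf xJ) (iter_in j pf xJ) h.
by move/(IH _ ij); rewrite subSS.
Qed.

Lemma iter_period (J : {fset E}) f x : perm_of J f -> x \in J ->
  exists p, [/\ 0 < p, p <= #|` J| & iter p f x = x].
Proof.
move=> pf xJ.
have : ~~ uniq (traject f x #|` J|.+1).
  apply/negP => u; suff : #|` J|.+1 <= #|` J| by rewrite ltnn.
  rewrite -[X in X <= _](size_traject f x); apply: (uniq_leq_size u) => y /trajectP [i _ ->].
  exact: (iter_in _ pf xJ).
move=> /(uniqPn x) [i [j [ij]]]; rewrite size_traject => jlt.
rewrite !nth_traject ?(ltn_trans ij) // => h.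
exists (j - i); split; first lia; first lia.
exact: (iter_cancel pf xJ (ltnW ij)).
Qed.

Lemma iter_mult (f : E -> E) (x : E) (p q : nat) : iter p f x = x -> iter (q * p) f x = x.
Proof. by move=> h; elim: q => // q IH; rewrite mulSn iterD IH h. Qed.

Lemma iter_mod (f : E -> E) (x : E) (p m : nat) : iter p f x = x -> iter m f x = iter (m %% p) f x.
Proof.
by move=> h; rewrite {1}(divn_eq m p) addnC iterD iter_mult.
Qed.

Lemma index_le (s : seq E) y i : i < size s -> nth y s i = y -> index y s <= i.
Proof.
move=> _ h; rewrite leqNgt; apply/negP => /(before_find y).
by rewrite h /= eqxx.
Qed.

Lemma kI_spec (J : {fset E}) f x y m : perm_of J f -> x \in J -> iter m f x = y ->
  let k := index y (traject f x #|` J|) in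
  [/\ iter k f x = y, k < #|` J| & uniq (traject f x k.+1)].
Proof.
move=> pf xJ hm k.
have [p [p0 pJ hp]] := iter_period pf xJ.
have yin : y \in traject f x #|` J|.
  apply/trajectP; exists (m %% p); last by rewrite -(iter_mod _ hp).
  by apply: leq_trans pJ; rewrite ltn_mod.
have klt : k < #|` J| by rewrite -[X in _ < X](size_traject f x) index_mem.
have hk : iter k f x = y.
  by rewrite -(nth_traject f klt) nth_index.
split => //.
apply/negP => /negP /(uniqPn x) [i [j [ij]]]; rewrite size_traject => jlt.
rewrite !nth_traject ?(ltn_trans ij) // => h.
have hq := iter_cancel pf xJ (ltnW ij) h.
have q0 : 0 < j - i by lia.
have : index y (traject f x #|` J|) <= k %% (j - i).
  apply: index_le; first by rewrite size_traject; apply: leq_ltn_trans klt; apply: leq_mod.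
  have hl : k %% (j - i) < #|` J| by apply: leq_ltn_trans klt; apply: leq_mod.
  rewrite (set_nth_default x) ?size_traject // nth_traject //.
  by rewrite -(iter_mod _ hq).
rewrite -/k => hk2.
have : k %% (j - i) < j - i by rewrite ltn_mod.
lia.
Qed.


Section VP.
Variable s : {fset E} -> E -> E.
Hypothesis vp : is_vperm s.

Lemma first_return (I J : {fset E}) x : fsubset I J -> x \in I ->
  exists m, [/\ 0 < m, iter m (s J) x \in I,
       (forall j, 0 < j < m -> iter j (s J) x \notin I) & s I x = iter m (s J) x].
Proof.
move=> IJ xI; have [_ hc] := vp; have [m [m0 [h1 [h2 h3]]]] := hc I J IJ x xI.
by exists m; split.
Qed.

Lemma iter_sub (I K : {fset E}) x : fsubset I K -> x \in I ->
  forall m, exists m', iter m (s I) x = iter m' (s K) x.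
Proof.
move=> IK xI; elim => [|m [m' IH]]; first by exists 0.
have yI : iter m (s I) x \in I by apply: iter_in xI; exact: vp.1.
have [m1 [_ _ _ h]] := first_return IK yI.
by exists (m1 + m'); rewrite iterD -IH -h.
Qed.

Lemma iter_super (I K : {fset E}) x z m : fsubset I K -> x \in I -> z \in I ->
  iter m (s K) x = z -> exists m', iter m' (s I) x = z.
Proof.
move=> IK; elim: m {-2}m (leqnn m) x => [|n IH] m hm x xI zI hz.
  by move: hm; rewrite leqn0 => /eqP m0; exists 0; rewrite -hz m0.
have [m1 [m10 h1 h2 h3]] := first_return IK xI.
case: (ltnP m m1) => mm1.
  case: m hm hz mm1 => [|m] hm hz mm1; first by exists 0.
  by move: (h2 m.+1 ltac:(by rewrite ltn0Sn mm1)); rewrite hz zI.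
have sI : s I x \in I by rewrite h3.
have [m'' hm''] := IH (m - m1) ltac:(lia) (s I x) sI zI ltac:(by rewrite h3 -iterD subnK).
by exists m''.+1; rewrite iterSr.
Qed.

Lemma every_I (I : {fset E}) x z : vequiv s x z -> x \in I -> z \in I ->
  exists m, iter m (s I) x = z.
Proof.
move=> [J [xJ zJ [m hm]]] xI zI.
have [m' hm'] := iter_sub (fsubsetUr I J) xJ m.
by apply: (iter_super (fsubsetUl I J) xI zI (m := m')); rewrite -hm'.
Qed.

Lemma k_le_card (J : {fset E}) x y m : x \in J -> iter m (s J) x = y ->
  (kI s J x y).+1 <= class_card s J x.
Proof.
move=> xJ hm; have pf := vp.1 J.
have [hk klt u] := kI_spec pf xJ hm.
rewrite /class_card -(size_traject (s J) x (kI s J x y).+1).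
apply: (uniq_leq_size u) => z /trajectP [i ilt ->].
have hiJ : iter i (s J) x \in J by exact: (iter_in _ pf xJ).
rewrite !inE /=; apply/andP; split; first exact: hiJ.
by apply/asboolP; exists J; split => //; exists i.
Qed.

Lemma kI_order (I J : {fset E}) x b : fsubset I J -> x \in I -> s I x != x ->
  b \in I -> b != x -> (exists m, iter m (s J) x = b) ->
  kI s J x (s I x) <= kI s J x b.
Proof.
move=> IJ xI ax bI bx [m hm].
have xJ : x \in J by move/fsubsetP: IJ; apply.
have pf := vp.1 J.
have [hk klt _] := kI_spec pf xJ hm.
have [m1 [m10 h1 h2 h3]] := first_return IJ xI.
rewrite -/(kI s J x b) in hk klt.
move: (kI s J x b) hk klt => kb hk klt.
have m1kb : m1 <= kb.
  rewrite leqNgt; apply/negP => lt.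
  case: kb hk klt lt => [|kb] hk klt lt; first by move: bx; rewrite -hk /= eqxx.
  by move: (h2 kb.+1 ltac:(by rewrite ltn0Sn lt)); rewrite hk bI.
apply: (leq_trans _ m1kb); apply: index_le; first by rewrite size_traject (leq_ltn_trans m1kb).
rewrite (set_nth_default x) ?size_traject ?(leq_ltn_trans m1kb) //.
by rewrite nth_traject ?(leq_ltn_trans m1kb) // h3.
Qed.

End VP.
End Comb.

Section P2.
Context {R : realType} {d : measure_display} {Omega : measurableType d}
        (P : probability Omega R).

Lemma ae_countable (T : countType) (Q : T -> Omega -> Prop) :
  (forall t, {ae P, forall w, Q t w}) -> {ae P, forall w, forall t, Q t w}.
Proof.
move=> H.
have : {ae P, forall w, forall n, match (choice.unpickle n : option T) with Some t => Q t w | None => True end}.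
  apply: ae_foralln => n; case: (choice.unpickle n : option T) => [t|]; first exact: H.
  exact: aeW.
by apply: filterS => w h t; have := h (choice.pickle t); rewrite choice.pickleK.
Qed.

Lemma markov_bound (f : Omega -> R) (A : set Omega) (c e : R) :
  measurable A -> 0 < c -> (forall w, 0 <= f w) -> (forall w, A w -> c <= f w) ->
  (\int[P]_w (f w)%:E < (c * e)%:E)%E -> (P A <= e%:E)%E.
Proof.
move=> mA c0 f0 fA hi.
have := le_lt_trans (markov_inner P f A c mA c0 f0 fA) hi.
by rewrite EFinM lte_pmul2l // => /ltW.
Qed.


Lemma leb0 (A : set R) : (forall t, ~ A t) -> lebesgue_measure A = 0%E.
Proof.
move=> H; rewrite (_ : A = set0) ?measure0 //.
by apply/seteqP; split => t // /H.
Qed.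

Section iid.
Context {E : countType} (l : nat -> R) (Xc : E -> Omega -> option nat) (Xt : E -> Omega -> R).
Hypothesis iid : iid_mu P l Xc Xt.

Lemma range_ae (y : E) :
  {ae P, forall w, forall n, Xc y w = Some n -> 0 <= Xt y w < l n}.
Proof.
have [hm [hmu _]] := iid.
pose B := fun ct : option nat * R =>
  match ct.1 with Some n => ~ (0 <= ct.2 < l n) | None => False end.
have cB : Cmeas B.
  move=> [n|] /=; last exact: measurable0.
  rewrite (_ : [set t | _] = ~` [set` `[0, l n[%R]); first by apply: measurableC; exact: measurable_itv.
  by apply/seteqP; split => t /=; rewrite in_itv /=.
have PB : P [set w | B (Xc y w, Xt y w)] = 0%E.
  rewrite hmu // /muC leb0 ?add0e; last by move=> t [].
  apply: eseries0 => i _ _; apply: leb0 => t [/= h1 h2]; exact: h1.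
apply: filterS (null_ae P _ (hm y B cB) PB) => w nB n hn.
case: (boolP (0 <= Xt y w < l n)) => // hb; exfalso; apply: nB.
by rewrite /B /= hn => h; rewrite h in hb.
Qed.


Definition cell (dl : R) (j : nat) := [set t : R | j%:R * dl <= t < j.+1%:R * dl].
Definition Cj (n : nat) (dl : R) (j : nat) := fun ct : option nat * R => ct.1 = Some n /\ cell dl j ct.2.

Lemma cell_itv dl j : cell dl j = [set` `[j%:R * dl, j.+1%:R * dl[%R].
Proof. by apply/seteqP; split => t /=; rewrite in_itv. Qed.

Lemma cC n dl j : Cmeas (Cj n dl j).
Proof.
move=> c; rewrite /Cj /=.
have [->|h] := pselect (c = Some n).
  rewrite (_ : [set t | _] = cell dl j); last by apply/seteqP; split => t /= => [[]|].
  rewrite cell_itv; exact: measurable_itv.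
by rewrite (_ : [set t | _] = set0) //; apply/seteqP; split => t // [].
Qed.

Lemma muC_cell n dl j : 0 < dl -> (muC l (Cj n dl j) <= dl%:E)%E.
Proof.
move=> dl0; rewrite /muC leb0 ?add0e; last by move=> t [[]].
rewrite (nneseries_split 0 n.+1); last by move=> k _; exact: measure_ge0.
rewrite add0n [X in (_ + X)%E]eseries0 ?adde0; last first.
  move=> i ni _; apply: leb0 => t [[/= [] hi] _] _; by move: ni; rewrite hi ltnn.

rewrite big_mkord big_ord_recr /= big1 ?add0e; last first.
  move=> i _; apply: leb0 => t [[/= [] hin]] _ _.
  by move: (ltn_ord i); rewrite hin ltnn.
apply: (le_trans (y := lebesgue_measure (cell dl j))).
  apply: le_measure; rewrite ?inE.
  - apply: measurableI; first exact: (cC n dl j (Some n)).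
    rewrite (_ : [set t | _] = [set` `[0, l n[%R]); first exact: measurable_itv.
    by apply/seteqP; split => t /=; rewrite in_itv.
  - rewrite cell_itv; exact: measurable_itv.
  by move=> t [[_ h] _].
rewrite cell_itv lebesgue_measure_itv /= lte_fin ltr_pM2r // ltr_nat ltnSn.
by rewrite -EFinB -mulrBl -natrB // subSnn mul1r.
Qed.


Lemma notie_ae (hl : in_Lambda l) (x y : E) (n : nat) : x != y ->
  {ae P, forall w, ~ (Xc x w = Some n /\ Xc y w = Some n /\ Xt x w = Xt y w)}.
Proof.
move=> xy; have [hm [hmu hind]] := iid.
have mXt z : measurable_fun setT (Xt z).
  by move=> _ Y mY; rewrite setTI; exact: (hm z (fun ct => Y ct.2) (fun _ => mY)).
have mXc z : measurable [set w | Xc z w = Some n].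
  apply: (hm z (fun ct => ct.1 = Some n)) => c.
  have [->|h] := pselect (c = Some n).
    by rewrite (_ : [set t | _] = setT) //; apply/seteqP; split.
  by rewrite (_ : [set t | _] = set0) //; apply/seteqP; split => t.
set A := [set w | Xc x w = Some n /\ Xc y w = Some n /\ Xt x w = Xt y w].
have mA : measurable A.
  rewrite (_ : A = [set w | Xc x w = Some n] `&` ([set w | Xc y w = Some n] `&`
     ([set w | Xt x w <= Xt y w] `&` [set w | Xt y w <= Xt x w])))%classic.
    by apply: measurableI => //; apply: measurableI => //; apply: measurableI; exact: meas_le.
  rewrite /A; apply/seteqP; split => w /=; first by move=> [-> [-> ->]]; rewrite lexx.
  by move=> [-> [-> [h3 h4]]]; split => //; split => //; apply/eqP; rewrite eq_le h3 h4.
apply: (null_ae P A mA).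
have [N [mN PN hN]] := range_ae x.
apply/eqP; rewrite -measure_le0; apply/lee_addgt0Pr => _ /posnumP[e]; rewrite add0e.
set dl := Num.min 1 (e%:num / 2).
have dl0 : 0 < dl by rewrite lt_min ltr01 divr_gt0.
have dl1 : dl <= 1 by rewrite ge_min lexx.
have dle : dl <= e%:num / 2 by rewrite ge_min lexx orbT.
have /andP [ln0 ln1] : 0 <= l n <= 1 by have [h _] := hl; exact: h.
set K := (Num.truncn (l n / dl)).+1.
set Ej := fun j => [set w | forall z, z \in [:: x; y] -> Cj n dl j (Xc z w, Xt z w)].
have mE j : measurable (Ej j).
  rewrite (_ : Ej j = [set w | Cj n dl j (Xc x w, Xt x w)] `&` [set w | Cj n dl j (Xc y w, Xt y w)])%classic.
    by apply: measurableI; apply: hm; exact: cC.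
  apply/seteqP; split => w /=.
    by move=> h; split; apply: h; rewrite !inE eqxx ?orbT.
  by move=> [h1 h2] z; rewrite !inE => /orP [] /eqP ->.
have PE j : (P (Ej j) <= (dl * dl)%:E)%E.
  rewrite /Ej (hind [:: x; y] (fun _ => Cj n dl j)) //; last by move=> z; exact: cC.
    rewrite big_cons big_cons big_nil mule1 EFinM.
    by apply: lee_pmul => //; rewrite ?hmu; try exact: cC; try exact: muC_cell.
  by rewrite /= inE xy.
have cover : (A `<=` N `|` \big[setU/set0]_(j < K) Ej j)%classic.
  move=> w Aw; case: (pselect (N w)) => [Nw|nNw]; first by left.
  right; have hr : forall n0, Xc x w = Some n0 -> 0 <= Xt x w < l n0.
    by apply: contrapT => h; apply: nNw; apply: hN.
  case: Aw => hx [hy ht].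
  have /andP [t0 tl] := hr n hx.
  have tdl0 : 0 <= Xt x w / dl by rewrite divr_ge0 // ltW.
  have /andP [j1 j2] := Num.Theory.truncn_itv tdl0.
  rewrite -bigcup_mkord; exists (Num.truncn (Xt x w / dl)).
    rewrite /= /K ltnS; apply: Num.Theory.le_truncn.
    by rewrite ler_pM2r ?invr_gt0 // ltW.
  have hc : cell dl (Num.truncn (Xt x w / dl)) (Xt x w).
    by rewrite /cell /= -ler_pdivlMr // -ltr_pdivrMr // j1 j2.
  move=> z; rewrite !inE => /orP [] /eqP zE; rewrite zE; first by split.
  by split; rewrite /= -?ht.
have mU : measurable (\big[setU/set0]_(j < K) Ej j).
  by apply: bigsetU_measurable => j _; exact: mE.
apply: (le_trans (le_measure _ _ _ cover)); rewrite ?inE //; first exact: measurableU.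
apply: (le_trans (measureU2 _ mN mU)).
have PN' : P N = 0%E by exact: PN.
rewrite [X in (X + _ <= _)%E](_ : _ = 0%E); last exact: PN.
rewrite add0e.
apply: (le_trans (content_subadditive P (F := Ej) (n := K) (fun k _ => mE k) mU (fun w h => h))).
apply: le_trans; first by apply: lee_sum => j _; exact: PE.
rewrite sumEFin lee_fin sumr_const card_ord -mulr_natl.
have hK : K%:R <= l n / dl + 1.
  by rewrite /K -addn1 natrD lerD2r Num.Theory.truncn_le divr_ge0 // ltW.
have h1 : K%:R * (dl * dl) <= (l n / dl + 1) * (dl * dl).
  by rewrite ler_wpM2r // mulr_ge0 // ltW.
have h2 : (l n / dl + 1) * (dl * dl) = l n * dl + dl * dl.
  by field; rewrite gt_eqF.
rewrite h2 in h1; nra.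
Qed.

End iid.
End P2.

Lemma big_superset {E : choiceType} : ~ finite_set [set: E] ->
  forall (I : {fset E}) n, exists J : {fset E}, fsubset I J /\ (n <= #|` J|)%N.
Proof.
move=> inf I; elim => [|n [J [IJ nJ]]]; first by exists I; rewrite fsubset_refl.
case: (ltnP n #|` J|) => h; first by exists J.
have [y yJ] : exists y, y \notin J.
  apply: contrapT => hn; apply: inf; apply: (sub_finite_set (B := [set` J])); last exact: finite_fset.
  by move=> z _ /=; apply: contrapT => hz; apply: hn; exists z; apply/negP.
exists (y |` J); split; first by apply: fsubset_trans IJ (fsubsetUr _ _).
by rewrite cardfsU1 yJ add1n ltnS.
Qed.
Section Ar.
Context {R : realType}.
Lemma int_small (p : R) (k : int) : 0 < p -> - p < k%:~R * p -> k%:~R * p < p -> k = 0.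
Proof.
move=> p0 h1 h2.
have a1 : k%:~R < (1%:~R : R) by rewrite -(ltr_pM2r p0) mul1r.
have a2 : ((-1)%:~R : R) < k%:~R by rewrite -(ltr_pM2r p0) mulrNz mulN1r.
rewrite ltr_int in a1; rewrite ltr_int in a2; lia.
Qed.

Lemma ccw_arith (p X A Z dA dZ : R) (i j : int) : 0 <= X < p -> 0 <= A < p -> 0 <= Z < p ->
  A != X -> 0 <= dA -> dA <= dZ -> dZ <= p ->
  dA - (A - X) = i%:~R * p -> dZ - (Z - X) = j%:~R * p -> ccw p X A <= ccw p X Z.
Proof.
move=> /andP [x0 xp] /andP [a0 ap] /andP [z0 zp] AX dA0 dAZ dZp hi hj.
have p0 : 0 < p by lra.
have eA : dA = ccw p X A.
  rewrite /ccw; case: (ltP X A) => XA.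
    have := int_small (p:=p) (k:=i) p0 ltac:(rewrite -hi; lra) ltac:(rewrite -hi; lra).
    by move=> i0; move: hi; rewrite i0 mul0r => /eqP; rewrite subr_eq0 => /eqP.
  have AX' : A < X by rewrite lt_neqAle AX XA.
  have := int_small (p:=p) (k:=i - 1) p0 ltac:(rewrite intrD mulrDl -hi; lra) ltac:(rewrite intrD mulrDl -hi; lra).
  move=> i0; move: hi; have -> : i = 1 by apply/eqP; rewrite -subr_eq0 i0.
  by rewrite mul1r => h; lra.
have cA0 : 0 < ccw p X A.
  rewrite /ccw; case: (ltP X A) => XA; first lra.
  have AX' : A < X by rewrite lt_neqAle AX XA.
  lra.
have eZ : dZ = ccw p X Z.
  rewrite /ccw; case: (ltP X Z) => XZ.
    have := int_small (p:=p) (k:=j) p0 ltac:(rewrite -hj; lra) ltac:(rewrite -hj; lra).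
    by move=> j0; move: hj; rewrite j0 mul0r => /eqP; rewrite subr_eq0 => /eqP.
  have := int_small (p:=p) (k:=j - 1) p0 ltac:(rewrite intrD mulrDl -hj; lra) ltac:(rewrite intrD mulrDl -hj; lra).
  move=> j0; move: hj; have -> : j = 1 by apply/eqP; rewrite -subr_eq0 j0.
  by rewrite mul1r => h; lra.
by rewrite -eA -eZ.
Qed.

Lemma ccw_le_p (p X A : R) : 0 <= X < p -> 0 <= A < p -> ccw p X A <= ccw p X X.
Proof.
move=> /andP [x0 xp] /andP [a0 ap]; rewrite /ccw ltxx; case: (ltP X A) => h; lra.
Qed.
End Ar.


Lemma iter_fixpt {T : Type} (f : T -> T) x m : f x = x -> iter m f x = x.
Proof. by move=> h; elim: m => //= m ->. Qed.

Unset Implicit Arguments.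
Theorem proposition3p13
  (R : realType) (d : measure_display) (Omega : measurableType d)
  (P : probability Omega R) (E : countType)
  (l : nat -> R)
  (s : Omega -> {fset E} -> E -> E)
  (lam : E -> Omega -> R) (Delta : E -> E -> Omega -> R)
  (Xc : E -> Omega -> option nat) (Xt : E -> Omega -> R) :
  ~ finite_set [set: E] ->
  in_Lambda l ->
  (* sigma is a random virtual permutation with law P_l *)
  random_vperm s ->
  central P s ->
  is_lambda P s lam ->
  is_Delta P s Delta ->
  {ae P, forall w, forall n, lamk s lam n w = l n} ->
  (* (X_x) i.i.d. with law mu *)
  iid_mu P l Xc Xt ->
  {ae P, forall w, forall x, Xc x w = None <-> vfixed (s w) x} ->
  {ae P, forall w, forall x y, x != y ->
     (vequiv (s w) x y <-> exists n, Xc x w = Some n /\ Xc y w = Some n) /\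
     (forall n, Xc x w = Some n -> Xc y w = Some n ->
        lam x w = l n /\ lam y w = l n)} ->
  {ae P, forall w, forall x y, x != y -> vequiv (s w) x y ->
     exists z : int, Delta x y w - (Xt y w - Xt x w) = z%:~R * lam x w} ->
  forall (I : {fset E}) (x : E), x \in I ->
  {ae P, forall w,
     (Xc x w = None -> s w I x = x) /\
     (forall n, Xc x w = Some n ->
        Xc (s w I x) w = Some n /\
        forall z, z \in I -> Xc z w = Some n ->
          ccw (l n) (Xt x w) (Xt (s w I x) w) <= ccw (l n) (Xt x w) (Xt z w))}.
Proof.
move=> Einf hl [vp sm] _ hlam hDel _ iid H9 H10 H11 I x xI.
have hJ := fun n => cid (big_superset Einf I n).
pose Jn n := sval (hJ n).
have hJn n : fsubset I (Jn n) /\ (n <= #|` Jn n|)%N := svalP (hJ n).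
have sid J w z : z \notin J -> s w J z = z by move=> h; exact: ((vp w).1 J).1 z h.
have mQ J (Q : (E -> E) -> Prop) : measurable [set w | Q (s w J)].
  exact: (meas_sJ s J (sid J) (sm J) Q).
pose kr n y w : R := (kI (s w) (Jn n) x y)%:R / (#|` Jn n|)%:R.
pose kr1 n y w : R := (kI (s w) (Jn n) x y).+1%:R / (#|` Jn n|)%:R.
have mkr n y : measurable_fun setT (kr n y).
  exact: (measf_sJ s (Jn n) (sid _) (sm _) (fun f => (index y (traject f x #|` Jn n|))%:R / (#|` Jn n|)%:R)).
have mkr1 n y : measurable_fun setT (kr1 n y).
  exact: (measf_sJ s (Jn n) (sid _) (sm _) (fun f => (index y (traject f x #|` Jn n|)).+1%:R / (#|` Jn n|)%:R)).
have xJn n : x \in Jn n by move/fsubsetP: (hJn n).1; apply.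
have MD : forall y (C : set Omega) (dl e : R), y \in I -> measurable C ->
    (forall w, C w -> vequiv (s w) x y) -> 0 < dl -> 0 < e ->
    exists N, forall n, (N <= n)%N ->
      (P (C `&` [set w | (dl <= kr n y w - Delta x y w)%R])%classic <= e%:E)%E /\
      (P (C `&` [set w | (dl <= Delta x y w - kr n y w)%R])%classic <= e%:E)%E.
  move=> y C dl e yI mC Cv dl0 e0.
  have [N hN] := (hDel x y).2 (dl * e) (mulr_gt0 dl0 e0).
  exists N => n Nn.
  have yJ : y \in Jn n by move/fsubsetP: (hJn n).1; apply.
  have hi := hN (Jn n) (xJn n) yJ (leq_trans Nn (hJn n).2).
  pose f w := if `[< vequiv (s w) x y >] then `|kr n y w - Delta x y w| else 0.
  have f0 w : 0 <= f w by rewrite /f; case: ifP.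
  have mD := (hDel x y).1.
  split; apply: (markov_bound (P:=P) (f:=f) (c:=dl) (e:=e) _ dl0 f0 _ hi).
  - by apply: measurableI => //; apply: meas_le; [exact: measurable_cst|exact: measurable_funB].
  - move=> w [Cw /= h]; rewrite /f asboolT; last exact: Cv.
    exact: (le_trans h (ler_norm _)).
  - by apply: measurableI => //; apply: meas_le; [exact: measurable_cst|exact: measurable_funB].
  - move=> w [Cw /= h]; rewrite /f asboolT; last exact: Cv.
    by rewrite distrC; exact: (le_trans h (ler_norm _)).
have ML : forall y (C : set Omega) (dl e : R), measurable C ->
    (forall n w, C w -> (kI (s w) (Jn n) x y).+1 <= class_card (s w) (Jn n) x)%N ->
    0 < dl -> 0 < e ->
    exists N, forall n, (N <= n)%N ->
      (P (C `&` [set w | (dl <= kr1 n y w - lam x w)%R])%classic <= e%:E)%E.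
  move=> y C dl e mC Cc dl0 e0.
  have [N hN] := (hlam x).2 (dl * e) (mulr_gt0 dl0 e0).
  exists N => n Nn.
  have hi := hN (Jn n) (leq_trans Nn (hJn n).2).
  pose f w := `|(class_card (s w) (Jn n) x)%:R / (#|` Jn n|)%:R - lam x w|.
  have f0 w : 0 <= f w by exact: normr_ge0.
  have mL := (hlam x).1.
  apply: (markov_bound (P:=P) (f:=f) (c:=dl) (e:=e) _ dl0 f0 _ hi).
    by apply: measurableI => //; apply: meas_le; [exact: measurable_cst|exact: measurable_funB].
  move=> w [Cw /= h]; apply: (le_trans h); apply: (le_trans _ (ler_norm _)).
  rewrite lerD2r /kr1 ler_wpM2r // ?invr_ge0 // ler_nat; exact: Cc.
have permI w : perm_of I (s w I) := (vp w).1 I.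
have iterI w m : iter m (s w I) x \in I := iter_in m (permI w) xI.
have empty_le (C : set Omega) (dl e : R) (F : Omega -> R) : 0 < dl -> 0 < e ->
    (P (C `&` [set w | (dl <= F w - F w)%R])%classic <= e%:E)%E.
  move=> dl0 e0; rewrite (_ : (C `&` _)%classic = set0) ?measure0 ?lee_fin ?ltW //.
  apply/seteqP; split => w // [_ /=]; rewrite subrr => h.
  by have := lt_le_trans dl0 h; rewrite ltxx.
have D0 : forall a, {ae P, forall w, ((exists m, iter m (s w I) x = a) /\ a != x) ->
    0 <= Delta x a w}.
  move=> a; case: (boolP (a \in I)) => aI; last first.
    by apply: aeW => w [[m hm] _]; move: aI; rewrite -hm iterI.
  set C := [set w | (exists m, iter m (s w I) x = a) /\ a != x].
  have mC : measurable C := mQ I (fun f => (exists m, iter m f x = a) /\ a != x).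
  have Cv w : C w -> vequiv (s w) x a.
    by move=> [[m hm] _]; exists I; split => //; exists m.
  apply: filterS (ae_ineq P C (fun _ => 0) (Delta x a) (fun _ _ => 0) (kr ^~ a) mC
     (measurable_cst _) (hDel x a).1 (fun _ => measurable_cst _) (fun n => mkr n a) _ _).
    by move=> w h Cw; exact: h Cw.
    by move=> n w _; rewrite /kr divr_ge0.
  move=> dl e dl0 e0; have [N hN] := MD a C dl e aI mC Cv dl0 e0.
  exists N; split; first exact: empty_le.
  by have [h1 _] := hN N (leqnn N).
have D1 : forall ab : E * E, {ae P, forall w,
    (s w I x = ab.1 /\ ab.1 != x /\ ab.2 != x /\ exists m, iter m (s w I) x = ab.2) ->
    Delta x ab.1 w <= Delta x ab.2 w}.
  move=> [a b] /=.
  case: (boolP ((a \in I) && (b \in I))) => hab; last first.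
    apply: aeW => w [ha [_ [_ [m hm]]]]; exfalso; move/negP: hab; apply; apply/andP; split.
      by rewrite -ha -[s w I x]/(iter 1 (s w I) x) iterI.
    by rewrite -hm iterI.
  move/andP: hab => [aI bI].
  set C := [set w | s w I x = a /\ a != x /\ b != x /\ exists m, iter m (s w I) x = b].
  have mC : measurable C := mQ I (fun f => f x = a /\ a != x /\ b != x /\ exists m, iter m f x = b).
  have Cva w : C w -> vequiv (s w) x a.
    by move=> [ha _]; exists I; split => //; exists 1.
  have Cvb w : C w -> vequiv (s w) x b.
    by move=> [_ [_ [_ [m hm]]]]; exists I; split => //; exists m.
  apply: filterS (ae_ineq P C (Delta x a) (Delta x b) (kr ^~ a) (kr ^~ b) mC
     (hDel x a).1 (hDel x b).1 (fun n => mkr n a) (fun n => mkr n b) _ _).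
    by move=> w h Cw; exact: h Cw.
    move=> n w [ha [ax [bx [m hm]]]]; rewrite /kr ler_wpM2r ?invr_ge0 // ler_nat.
    have [m' hm'] := iter_sub (vp w) (hJn n).1 xI m.
    rewrite -ha; apply: (kI_order (vp w) (hJn n).1 xI) => //; first by rewrite ha.
    by exists m'; rewrite -hm'.
  move=> dl e dl0 e0.
  have [N1 hN1] := MD a C dl e aI mC Cva dl0 e0.
  have [N2 hN2] := MD b C dl e bI mC Cvb dl0 e0.
  exists (maxn N1 N2); split.
    by have [_ h] := hN1 (maxn N1 N2) (leq_maxl _ _).
  by have [h _] := hN2 (maxn N1 N2) (leq_maxr _ _).
have D2 : forall b, {ae P, forall w, ((exists m, iter m (s w I) x = b) /\ b != x) ->
    Delta x b w <= lam x w}.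
  move=> b; case: (boolP (b \in I)) => bI; last first.
    by apply: aeW => w [[m hm] _]; move: bI; rewrite -hm iterI.
  set C := [set w | (exists m, iter m (s w I) x = b) /\ b != x].
  have mC : measurable C := mQ I (fun f => (exists m, iter m f x = b) /\ b != x).
  have Cv w : C w -> vequiv (s w) x b.
    by move=> [[m hm] _]; exists I; split => //; exists m.
  apply: filterS (ae_ineq P C (Delta x b) (lam x) (kr ^~ b) (kr1 ^~ b) mC
     (hDel x b).1 (hlam x).1 (fun n => mkr n b) (fun n => mkr1 n b) _ _).
    by move=> w h Cw; exact: h Cw.
    by move=> n w _; rewrite /kr /kr1 ler_wpM2r ?invr_ge0 // ler_nat.
  have Cc n w : C w -> ((kI (s w) (Jn n) x b).+1 <= class_card (s w) (Jn n) x)%N.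
    move=> [[m hm] _]; have [m' hm'] := iter_sub (vp w) (hJn n).1 xI m.
    by apply: (k_le_card (vp w) (xJn n) (m := m')); rewrite -hm'.
  move=> dl e dl0 e0.
  have [N1 hN1] := MD b C dl e bI mC Cv dl0 e0.
  have [N2 hN2] := ML b C dl e mC Cc dl0 e0.
  exists (maxn N1 N2); split.
    by have [_ h] := hN1 (maxn N1 N2) (leq_maxl _ _).
  exact: hN2 (maxn N1 N2) (leq_maxr _ _).
have R1 := ae_countable (fun y => range_ae iid y).
have NT : {ae P, forall w, forall p : E * nat, p.1 != x ->
    ~ (Xc x w = Some p.2 /\ Xc p.1 w = Some p.2 /\ Xt x w = Xt p.1 w)}.
  apply: ae_countable => -[y n] /=.
  case: (eqVneq y x) => [->|yx]; first by apply: aeW => w /=.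
  apply: filterS (notie_ae iid hl n (x := x) (y := y) _); last by rewrite eq_sym.
  by move=> w h _.
have D0' := ae_countable D0.
have D1' := ae_countable D1.
have D2' := ae_countable D2.
have cj (A B : Omega -> Prop) : {ae P, forall w, A w} -> {ae P, forall w, B w} ->
    {ae P, forall w, A w /\ B w}.
  move=> ha hb; exact: (filterS2 _ (fun w (a : A w) (b : B w) => conj a b) ha hb).
apply: filterS (cj _ _ H9 (cj _ _ H10 (cj _ _ H11 (cj _ _ R1 (cj _ _ NT (cj _ _ D0' (cj _ _ D1' D2'))))))).
move=> w [h9 [h10 [h11 [r1 [nt [d0 [d1 d2]]]]]]].
split.
  by move=> hN; exact: ((h9 x).1 hN I xI).
move=> n hn.
set a := s w I x.
have aI : a \in I := (permI w).2.1 x xI.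
have vxa : a != x -> vequiv (s w) x a.
  by move=> _; exists I; split => //; exists 1.
have hXa : Xc a w = Some n.
  case: (eqVneq a x) => [->//|ax].
  have xa : x != a by rewrite eq_sym.
  have [n' [h1 h2]] := (h10 x a xa).1.1 (vxa ax).
  by rewrite hn in h1; case: h1 => ->.
split => // z zI hz.
have rx := r1 x n hn.
have ra := r1 a n hXa.
have rz := r1 z n hz.
case: (eqVneq z x) => [->|zx]; first exact: ccw_le_p rx ra.
have xz : x != z by rewrite eq_sym.
have vxz : vequiv (s w) x z by apply: (h10 x z xz).1.2; exists n.
have [m hm] := every_I (vp w) vxz xI zI.
case: (eqVneq a x) => ax.
  by move: hm; rewrite iter_fixpt // => hxz; rewrite hxz eqxx in zx.
case: (eqVneq a z) => [<-|az]; first exact: lexx.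
have xa : x != a by rewrite eq_sym.
have e0 := d0 a (conj (ex_intro _ 1 erefl) ax).
have e1 := d1 (a, z) (conj erefl (conj ax (conj zx (ex_intro _ m hm)))).
have e2 := d2 z (conj (ex_intro _ m hm) zx).
have [lx _] := (h10 x a xa).2 n hn hXa.
have [i hi] := h11 x a xa (vxa ax).
have [j hj] := h11 x z xz vxz.
rewrite lx in hi hj e2.
have aXne : Xt a w != Xt x w.
  by apply/eqP => he; apply: (nt (a, n) ax); split => //; split.
exact: (ccw_arith rx ra rz aXne e0 e1 e2 hi hj).
Qed.
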